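(* In the setting described in the context, let $p$ be a prime, $k\ge1$ an integer, $1\le j\le r$, and $n_0,\dots,n_{j-1}\in\mathbb Z$ such that $\big(u_j+\sum_{i=0}^{j-1}n_iu_i\big)h'\in p^kL$. Then $p^k$ divides the integer $c_{jj0}$, and therefore $p^k$ divides $\lambda$.
   Context: Let $\mathbb K$ be a number field of degree $d=r+2\ge2$ with exactly one pair of complex conjugate embeddings; order its embeddings $\sigma_1,\dots,\sigma_r$ (real), $\sigma_{\mathbb C}$, $\overline{\sigma_{\mathbb C}}$; a $\mathbb Q$-basis $(e_0,\dots,e_{r+1})$ of $\mathbb K$ is positive if $i\cdot\det(\sigma_j(e_{k-1}))_{1\le j,k\le d}>0$. Let $\mathfrak f\ne\mathcal O_{\mathbb K}$ be an integral ideal, $q\mathbb Z=\mathfrak f\cap\mathbb Z$, $\mathfrak b$ an integral ideal coprime to $\mathfrak f$, $L=\mathfrak f\mathfrak b^{-1}$, $\mathfrak a$ an integral ideal coprime to $\mathfrak f\mathfrak b$ with $\mathfrak a^{-1}L/L$ cyclic, $N=\mathcal N(\mathfrak a)$; $h\in L$ is admissible if $h/q-1\in L$ and $h/N$ generates $\mathfrak a^{-1}L/L$. Let $\mathcal O^{+,\times}_{\mathfrak f}$ be the group of units $\equiv1\bmod\mathfrak f$ positive at all real embeddings, $u_1,\dots,u_r\in\mathcal O^{+,\times}_{\mathfrak f}$ with $1,u_1,\dots,u_r$ linearly independent over $\mathbb Q$, $u_0=1$. Let $h=mh'\in L$ be admissible with $m\in\mathbb Z_{>0}$ and $h'$ primitive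 in $L$. Fix a positive $\mathbb Z$-basis $(e_0=h',e_1,\dots,e_{r+1})$ of $L$ such that $u_ih'=\sum_{k=0}^ic_{ik0}e_k$ with $c_{ik0}\in\mathbb Z$ and $c_{ii0}>0$ for $1\le i\le r$, and put $\lambda=\prod_{i=1}^rc_{ii0}$. *)

(* Defs.v *)
From HB Require Import structures.
From mathcomp Require Import all_boot all_order all_algebra all_field.
Set Implicit Arguments. Unset Strict Implicit. Unset Printing Implicit Defensive.
Import Order.TTheory GRing.Theory Num.Theory.
Local Open Scope ring_scope.

Section NumberFieldDefs.
Variable K : fieldExtType rat.

Definition algint (x : K) : Prop :=
  exists P : {poly int},
    P \is monic /\ root (map_poly (fun z : int => (z%:~R : K)) P) x.

Definition int_ideal (I : K -> Prop) : Prop :=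
  [/\ (forall x, I x -> algint x), I 0,
      (forall x y, I x -> I y -> I (x + y)),
      (forall a x, algint a -> I x -> I (a * x)) &
      exists x, I x /\ x != 0].

Definition coprime_ideals (I J : K -> Prop) : Prop :=
  exists x y, [/\ I x, J y & x + y = 1].

(* F B^{-1} = { x | x B ⊆ F } (B invertible fractional ideal) *)
Definition ideal_quot (F B : K -> Prop) : K -> Prop :=
  fun x => forall y, B y -> F (x * y).

(* N(A) = #(O_K / A) = N *)
Definition ideal_norm (A : K -> Prop) (N : nat) : Prop :=
  exists s : seq K,
    [/\ size s = N, (forall x, x \in s -> algint x),
        (forall i j, (i < N)%N -> (j < N)%N -> A (nth 0 s i - nth 0 s j) -> i = j) &
        (forall x, algint x -> exists2 y, y \in s & A (x - y))].

Definition quot_generated_by (M L : K -> Prop) (g : K) : Prop :=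
  M g /\ forall x, M x -> exists n : int, L (x - g *~ n).

Definition quot_cyclic (M L : K -> Prop) : Prop :=
  exists g, quot_generated_by M L g.

Definition admissible (L Ainv_L : K -> Prop) (q N : nat) (h : K) : Prop :=
  [/\ L h, L (h / q%:R - 1) & quot_generated_by Ainv_L L (h / N%:R)].

Definition unit_plus_f (f : K -> Prop) (r : nat)
    (emb : nat -> {rmorphism K -> algC}) (u : K) : Prop :=
  [/\ algint u, (exists v, algint v /\ u * v = 1), f (u - 1) &
      forall j, (j < r)%N -> 0 < emb j u].

Definition primitive_in (L : K -> Prop) (x : K) : Prop :=
  L x /\ forall t : nat, (1 < t)%N -> ~ L (x / t%:R).

Definition Zbasis (L : K -> Prop) (d : nat) (e : nat -> K) : Prop :=
  (forall x, L x <-> exists c : 'I_d -> int, x = \sum_(k < d) e k *~ c k) /\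
  (forall c : 'I_d -> int, \sum_(k < d) e k *~ c k = 0 -> forall k, c k = 0).

End NumberFieldDefs.

(* Main.v *)
Require Import Defs.
From HB Require Import structures.
From mathcomp Require Import all_boot all_order all_algebra all_field.
From mathcomp Require Import zify.
Import Order.TTheory GRing.Theory Num.Theory.
Local Open Scope ring_scope.

Theorem lemma17
  (K : fieldExtType rat) (r : nat) (hdim : \dim {: K} = r.+2)
  (* embeddings: emb 0..r-1 real, emb r = sigma_C, emb (r+1) = conj sigma_C *)
  (emb : nat -> {rmorphism K -> algC})
  (hreal : forall j, (j < r)%N -> forall x, emb j x \is Num.real)
  (hcplx : exists x, emb r x \isn't Num.real)
  (hconj : forall x, emb r.+1 x = (emb r x)^*)
  (hdist : forall j1 j2, (j1 < r.+2)%N -> (j2 < r.+2)%N ->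
             (forall x, emb j1 x = emb j2 x) -> j1 = j2)
  (hall : forall s : {rmorphism K -> algC},
             exists2 j, (j < r.+2)%N & forall x, s x = emb j x)
  (* ideals *)
  (f b a : K -> Prop) (hf : int_ideal f) (hf1 : ~ f 1)
  (q : nat) (hq : forall z : int, f (z%:~R) <-> (q%:Z %| z)%Z)
  (hb : int_ideal b) (hbf : coprime_ideals f b)
  (L : K -> Prop) (hL : L = ideal_quot f b)
  (ha : int_ideal a) (haf : coprime_ideals a f) (hab : coprime_ideals a b)
  (hcyc : quot_cyclic (ideal_quot L a) L)
  (N : nat) (hN : ideal_norm a N)
  (* units *)
  (u : nat -> K) (hu0 : u 0%N = 1)
  (hu : forall i, (1 <= i <= r)%N -> unit_plus_f f r emb (u i))
  (hfree : free [seq u i | i <- iota 0 r.+1])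
  (* h = m h' admissible, h' primitive *)
  (h h' : K) (m : nat) (hm : (0 < m)%N) (hh : h = m%:R * h')
  (hadm : admissible L (ideal_quot L a) q N h)
  (hprim : primitive_in L h')
  (* positive Z-basis (e_0 = h', e_1, ..., e_{r+1}) of L *)
  (e : nat -> K) (he0 : e 0%N = h') (hbasis : Zbasis L r.+2 e)
  (hpos : 0 < 'i * \det (\matrix_(j < r.+2, k < r.+2) emb j (e k)))
  (c : nat -> nat -> int)
  (hc : forall i, (1 <= i <= r)%N ->
          u i * h' = \sum_(k < i.+1) e k *~ c i k)
  (hcpos : forall i, (1 <= i <= r)%N -> 0 < c i i)
  (* the statement proper *)
  (p : nat) (hp : prime p) (k : nat) (hk : (1 <= k)%N)
  (j : nat) (hj : (1 <= j <= r)%N) (n : nat -> int)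
  (hmem : exists2 y, L y &
            (u j + \sum_(i < j) u i *~ n i) * h' = (p ^ k)%:R * y) :
  ((p ^ k)%:Z %| c j j)%Z /\
  ((p ^ k)%:Z %| \prod_(1 <= i < r.+1) c i i)%Z.
Proof.
set E := fun (a : 'I_r.+2 -> int) => \sum_(kk < r.+2) e kk *~ a kk.
have ED : forall a b, E a + E b = E (fun kk => a kk + b kk).
  by move=> a0 b0; rewrite /E -big_split; apply: eq_bigr => kk _; rewrite mulrzDr.
have EZ : forall a z, E a *~ z = E (fun kk => a kk * z).
  by move=> a0 z; rewrite /E mulrz_suml; apply: eq_bigr => kk _; rewrite mulrzA.
have EE : forall a b : 'I_r.+2 -> int, (forall kk, a kk = b kk) -> E a = E b.
  by move=> a0 b0 hab0; apply: eq_bigr => kk _; rewrite hab0.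
pose C := fun (i : nat) (kk : 'I_r.+2) =>
  if i == 0%N then ((kk : nat) == 0%N)%:Z else if (kk <= i)%N then c i kk else 0.
have hC : forall i, (i <= r)%N -> u i * h' = E (C i).
  move=> i hi; rewrite /E /C.
  case: (eqVneq i 0%N) => [->|i0].
    rewrite hu0 mul1r big_ord_recl /= big1 ?addr0 ?he0 //.
  have h1 : (1 <= i <= r)%N by rewrite hi andbT lt0n; exact: i0.
  have hir : (i.+1 <= r.+2)%N by lia.
  rewrite (hc i h1) (big_ord_widen _ (fun kk : nat => e kk *~ c i kk) hir).
  rewrite big_mkcond; apply: eq_bigr => kk _ /=.
  by rewrite ltnS; case: ifP => _; rewrite ?mulr0z.
have hS : forall jj, (jj <= j)%N ->
    \sum_(i < jj) (u i *~ n i) * h' = E (fun kk => \sum_(i < jj) C i kk * n i).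
  elim=> [|jj IH] hjj.
    rewrite big_ord0 /E big1 // => kk _; by rewrite big_ord0 mulr0z.
  rewrite big_ord_recr /= IH; last by lia.
  rewrite mulrzAl hC; last by move/andP: hj => [_ ?]; lia.
  rewrite EZ ED; apply: EE => kk.
  by rewrite big_ord_recr.
case: hmem => y hy hv.
have [hyb hind] := hbasis.
have [d hd] := (proj1 (hyb y) hy).
have hjr : (j < r.+2)%N by move/andP: hj => [_ ?]; lia.
set J := Ordinal hjr.
have key : c j j = d J * (p ^ k)%:Z.
  have eq1 : E (fun kk => C j kk + \sum_(i < j) C i kk * n i)
           = E (fun kk => d kk * (p ^ k)%:Z).
    rewrite -ED -hC; last by move/andP: hj => [_ ?]; lia.
    rewrite -hS // -mulr_suml -mulrDl hv -EZ.
    by rewrite /E -hd -mulrzl.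
  have eq2 : E (fun kk => (C j kk + \sum_(i < j) C i kk * n i) - d kk * (p ^ k)%:Z) = 0.
    rewrite /E; under eq_bigr => kk _ do rewrite mulrzBr.
    by rewrite sumrB; apply/eqP; rewrite subr_eq0; apply/eqP.
  have := hind _ eq2 J; move/eqP; rewrite subr_eq0 => /eqP <-.
  rewrite big1 ?addr0.
    rewrite /C /=; case: (eqVneq j 0%N) => [j0|_]; first by move: hj; rewrite j0.
    by rewrite leqnn.
  move=> i _; rewrite /C /=.
  case: (eqVneq (i : nat) 0%N) => [->|i0].
    by case: (eqVneq j 0%N) => [j0|_]; [move: hj; rewrite j0 | rewrite mul0r].
  have hji : (j <= i)%N = false by apply/negbTE; rewrite -ltnNge ltn_ord.
  by rewrite hji mul0r.
have hdv : ((p ^ k)%:Z %| c j j)%Z by rewrite key dvdz_mull.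
split => //.
have h1j : (1 <= j)%N by case/andP: hj.
have hjr1 : (j <= r.+1)%N by case/andP: hj => _ ?; lia.
rewrite (big_cat_nat h1j hjr1) /=.
have hjr2 : (j < r.+1)%N by case/andP: hj => _ ?; lia.
rewrite (big_ltn hjr2).
by apply: dvdz_mull; apply: dvdz_mulr.
Qed.
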